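(* Let $\mathcal{P}$ be a probability distribution on $\mathbb{R}^d$ whose support is contained in the unit ball $\{\mathbf{z}:\|\mathbf{z}\|\le 1\}$, let $\varphi:\mathbb{R}\to\mathbb{R}$ be twice differentiable with $|\varphi''(\alpha)|\le c\,|\varphi'(\alpha)|$ for all $\alpha$, for some constant $c>0$, and let $f(\mathbf{w})=\mathbb{E}_{\mathbf{z}\sim\mathcal{P}}[\varphi(\mathbf{w}^\top\mathbf{z})]$ with stochastic gradients $\nabla f_{\mathbf{z}}(\mathbf{w})=\varphi'(\mathbf{w}^\top\mathbf{z})\,\mathbf{z}$ (so that $\nabla^2 f(\mathbf{w})=\mathbb{E}_{\mathbf{z}}[\varphi''(\mathbf{w}^\top\mathbf{z})\mathbf{z}\mathbf{z}^\top]$). Let $\mathbf{w}\in\mathbb{R}^d$ and let $\mathbf{v}$ be a unit-length eigenvector of $\nabla^2 f(\mathbf{w})$ with eigenvalue $\lambda<0$. Then $\mathbb{E}_{\mathbf{z}}[(\nabla f_{\mathbf{z}}(\mathbf{w})^\top\mathbf{v})^2]\ge(\lambda/c)^2$. *)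

(* Defs.v *)
From HB Require Import structures.
From mathcomp Require Import all_boot all_order all_algebra.
From mathcomp Require Import all_classical all_reals all_analysis.
Set Implicit Arguments. Unset Strict Implicit. Unset Printing Implicit Defensive.
Import Order.TTheory GRing.Theory Num.Theory.
Local Open Scope ring_scope.

(* Points z of R^d are d-tuples (measurable structure = product / Borel
   sigma-algebra of R^d); parameter vectors w, v are row vectors 'rV_d. *)

Definition dotz {R : realType} {d : nat} (w : 'rV[R]_d) (z : d.-tuple R) : R :=
  \sum_(i < d) w 0 i * tnth z i.

Definition sqnormz {R : realType} {d : nat} (z : d.-tuple R) : R :=
  \sum_(i < d) tnth z i ^+ 2.

Definition sqnormv {R : realType} {d : nat} (v : 'rV[R]_d) : R :=
  \sum_(i < d) v 0 i ^+ 2.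

Definition hessf {R : realType} {d : nat} (P : probability (d.-tuple R) R)
  (phi'' : R -> R) (w : 'rV[R]_d) : 'M[R]_d :=
  \matrix_(i < d, j < d)
     fine (\int[P]_z (phi'' (dotz w z) * tnth z i * tnth z j)%:E).

(* Main.v *)
Require Import Defs.
From HB Require Import structures.
From mathcomp Require Import all_boot all_order all_algebra.
From mathcomp Require Import all_classical all_reals all_analysis.
From mathcomp Require Import ring lra.
Import Order.TTheory GRing.Theory Num.Theory.
Import measurable_realfun numFieldNormedType.Exports.
Local Open Scope ring_scope.
Local Open Scope classical_set_scope.
Lemma meas_sum (d0 : measure_display) (T : measurableType d0) (R : realType) (I : Type)
  (s : seq I) (F : I -> T -> R) :
  (forall i, measurable_fun setT (F i)) -> measurable_fun setT (fun z => \sum_(i <- s) F i z).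
Proof.
move=> mF; elim: s => [|i s IH].
  under eq_fun do rewrite big_nil. exact: measurable_cst.
under eq_fun do rewrite big_cons. exact: measurable_funD.
Qed.

Lemma meas_dotz (R : realType) (d : nat) (w : 'rV[R]_d) :
  measurable_fun setT (fun z : d.-tuple R => dotz w z).
Proof.
rewrite /dotz; apply: meas_sum => i.
apply: measurable_funM; first exact: measurable_cst.
exact: measurable_tnth.
Qed.

Lemma meas_sqnormz (R : realType) (d : nat) :
  measurable_fun setT (fun z : d.-tuple R => sqnormz z).
Proof.
rewrite /sqnormz; apply: meas_sum => i.
apply: measurable_funX; exact: measurable_tnth.
Qed.

Lemma deriv_cont (R : realType) (f : R -> R) :
  (forall a, derivable f a 1) -> continuous f.
Proof.
move=> df x; apply: differentiable_continuous; exact/derivable1_diffP.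
Qed.

Lemma meas_deriv (R : realType) (f : R -> R) :
  (forall a, derivable f a 1) -> measurable_fun setT (derive1 f).
Proof.
move=> df; have cf := @deriv_cont R f df.
apply: (@measurable_fun_cvg _ R R setT (fun n x => (harmonic n : R)^-1 *: ((f \o shift x) (harmonic n *: 1) - f x))).
- move=> n.
  have -> : (fun x => (harmonic n : R)^-1 *: ((f \o shift x) (harmonic n *: 1) - f x))
     = (fun x => (harmonic n : R)^-1 * (f (harmonic n + x) - f x)).
    by apply: funext => x /=; rewrite [_ *: 1]mulr1.
  apply: measurable_funM; first exact: measurable_cst.
  apply: measurable_funB; last exact: continuous_measurable_fun.
  apply: (measurableT_comp (continuous_measurable_fun cf)).
  apply: measurable_funD; [exact: measurable_cst | exact: measurable_id].
- move=> x _.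
  have H : (fun h : R => h^-1 *: ((f \o shift x) (h *: 1) - f x)) @ 0^' --> derive1 f x.
    by rewrite derive1E; exact: (df x).
  have H2 : (fun h : R => h^-1 *: ((f \o shift x) (h *: 1) - f x)) @ 0^'+ --> derive1 f x.
    move=> A /H /nbhs_ballP [_ /posnumP[e] xe_A].
    by exists e%:num => //= y xe_y; rewrite lt_def => /andP [xney _]; apply: xe_A.
  move/cvg_at_rightP: H2; apply; split.
    by move=> n; rewrite /harmonic invr_gt0 ltr0n.
  exact: cvg_harmonic.
Qed.

Lemma ae_supp (R : realType) (d : nat) (P : probability (d.-tuple R) R)
  (hsupp : P [set z | 1 < sqnormz z] = 0%E) (Q : d.-tuple R -> Prop) :
  (forall z, sqnormz z <= 1 -> Q z) -> \forall z \ae P, Q z.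
Proof.
move=> HQ; exists [set z | 1 < sqnormz z]; split => //.
- have := @meas_sqnormz R d measurableT _ (measurable_itv (`]1, +oo[%R : interval R)).
  rewrite setTI; congr (_ _); apply/seteqP; split => z /=; by rewrite in_itv /= andbT.
- by move=> z /= nQ; rewrite ltNge; apply/negP => h; exact: nQ (HQ z h).
Qed.

Lemma tnth_le1 (R : realType) (d : nat) (z : d.-tuple R) (i : 'I_d) :
  sqnormz z <= 1 -> `|tnth z i| <= 1.
Proof.
move=> h; have : tnth z i ^+ 2 <= 1.
  apply: le_trans h; rewrite /sqnormz (bigD1 i) //= lerDl.
  by apply: sumr_ge0 => j _; exact: sqr_ge0.
rewrite -real_normK ?num_real // => h2.
have := normr_ge0 (tnth z i); nra.
Qed.

Lemma dotz_v_le1 (R : realType) (d : nat) (v : 'rV[R]_d) (z : d.-tuple R) :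
  sqnormv v = 1 -> sqnormz z <= 1 -> `|dotz v z| <= 1.
Proof.
move=> hv hz; rewrite /dotz; apply: le_trans (ler_norm_sum _ _ _) _.
apply: (@le_trans _ _ (\sum_(i < d) (v 0 i ^+ 2 + tnth z i ^+ 2) / 2)).
  apply: ler_sum => i _; rewrite normrM.
  rewrite -[v 0 i ^+ 2]real_normK ?num_real // -[tnth z i ^+ 2]real_normK ?num_real //.
  have := normr_ge0 (v 0 i); have := normr_ge0 (tnth z i).
  have := sqr_ge0 (`|v 0 i| - `|tnth z i|); nra.
rewrite -mulr_suml big_split /= -/(sqnormz z).
have -> : \sum_(i < d) v 0 i ^+ 2 = sqnormv v by [].
rewrite hv; lra.
Qed.

Lemma dotz_w_le (R : realType) (d : nat) (w : 'rV[R]_d) (z : d.-tuple R) :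
  sqnormz z <= 1 -> `|dotz w z| <= \sum_(i < d) `|w 0 i|.
Proof.
move=> hz; rewrite /dotz; apply: le_trans (ler_norm_sum _ _ _) _.
apply: ler_sum => i _; rewrite normrM.
have := @tnth_le1 R d z i hz; have := normr_ge0 (w 0 i); have := normr_ge0 (tnth z i); nra.
Qed.

Theorem lemma4 (R : realType) (d : nat) (P : probability (d.-tuple R) R)
  (phi : R -> R) (c : R)
  (hsupp : P [set z | 1 < sqnormz z] = 0%E)
  (hd1 : forall a : R, derivable phi a 1)
  (hd2 : forall a : R, derivable (derive1 phi) a 1)
  (hc : 0 < c)
  (hphi : forall a : R, `|(derive1 (derive1 phi)) a| <= c * `|(derive1 phi) a|)
  (w v : 'rV[R]_d) (lambda : R)
  (hv : sqnormv v = 1)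
  (heig : hessf P (derive1 (derive1 phi)) w *m v^T = lambda *: v^T)
  (hlam : lambda < 0) :
  (((lambda / c) ^+ 2)%:E <=
     \int[P]_z ((((derive1 phi) (dotz w z)) * dotz v z) ^+ 2)%:E)%E.
Proof.
set p1 := derive1 phi in hd2 hphi heig *.
set p2 := derive1 p1 in hphi heig *.
have cp1 : continuous p1 := @deriv_cont R p1 hd2.
have mp1 : measurable_fun setT p1 := continuous_measurable_fun cp1.
have mp2 : measurable_fun setT p2 := @meas_deriv R p1 hd2.
have ms := @meas_dotz R d w.
have mu := @meas_dotz R d v.
pose W := \sum_(i < d) `|w 0 i|.
have W0 : 0 <= W by apply: sumr_ge0.
have [c0 _ Hc0] : exists2 c0, c0 \in `[-W, W]%R &
    forall t, t \in `[-W, W]%R -> `|p1 t| <= `|p1 c0|.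
  apply: (@EVT_max R (fun t => `|p1 t|)); first lra.
  apply: continuous_subspaceT => t.
  exact: (continuous_comp (cp1 t) (@norm_continuous _ R _)).
pose M := c * `|p1 c0|.
have M0 : 0 <= M by rewrite /M mulr_ge0 // ltW.
have bnd2 : forall z, sqnormz z <= 1 -> `|p2 (dotz w z)| <= M.
  move=> z hz; apply: le_trans (hphi _) _; rewrite /M ler_pM2l //; apply: Hc0.
  by rewrite in_itv /= -ler_norml; exact: dotz_w_le.
pose f (i j : 'I_d) (z : d.-tuple R) := p2 (dotz w z) * tnth z i * tnth z j.
have mf : forall i j, measurable_fun setT (f i j).
  move=> i j; apply: measurable_funM; last exact: measurable_tnth.
  apply: measurable_funM; last exact: measurable_tnth.
  exact: measurableT_comp mp2 ms.
have intf : forall i j, P.-integrable setT (fun z => (f i j z)%:E).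
  move=> i j; apply/integrableP; split; first exact/measurable_EFinP.
  apply: (@le_lt_trans _ _ (\int[P]_z (cst M%:E z))%E); last first.
    rewrite integral_cst //.
    have h1 : (P : measure _ R) [set: d.-tuple R] = 1%E := probability_setT P.
    by rewrite h1 -EFinM ltry.
  apply: (@ae_ge0_le_integral _ _ R P setT measurableT) => //.
  - have mE : measurable_fun setT (fun z => (f i j z)%:E) by exact/measurable_EFinP.
    exact: (measurableT_comp (@abse_measurable R setT) mE).
  - apply: (@ae_supp R d P hsupp) => z hz _; rewrite abse_EFin lee_fin /f !normrM.
    rewrite -[M]mulr1 -[M * 1]mulr1.
    apply: ler_pM => //.
      apply: ler_pM => //; [exact: bnd2 | exact: tnth_le1].
    exact: tnth_le1.
pose F z := p2 (dotz w z) * dotz v z ^+ 2.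
have mF : measurable_fun setT F.
  apply: measurable_funM; first exact: measurableT_comp mp2 ms.
  exact: measurable_funX.
have HE : forall i j, ((hessf P p2 w i j)%:E = \int[P]_z (f i j z)%:E)%E.
  move=> i j; rewrite /hessf mxE fineK //.
  exact: integrable_fin_num (intf i j).
have hrow : forall i, \sum_j hessf P p2 w i j * v 0 j = lambda * v 0 i.
  move=> i; have := congr1 (fun A : 'M[R]_(d, 1) => A i 0) heig; rewrite mxE [X in _ = X -> _]mxE [v^T _ _]mxE => <-.
  by apply: eq_bigr => j _; rewrite [v^T _ _]mxE.
have intg : forall i j, P.-integrable setT (fun z => ((v 0 i * v 0 j) * f i j z)%:E).
  move=> i j; under eq_fun do rewrite EFinM.
  exact: integrableZl (intf i j).
have lamE : (lambda%:E = \int[P]_z (F z)%:E)%E.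
  have -> : lambda = \sum_i \sum_j v 0 i * v 0 j * hessf P p2 w i j.
    transitivity (\sum_i v 0 i * (lambda * v 0 i)).
      rewrite -[LHS]mulr1 -hv /sqnormv mulr_sumr; apply: eq_bigr => i _; ring.
    apply: eq_bigr => i _; rewrite -hrow mulr_sumr; apply: eq_bigr => j _; ring.
  have eF : (fun z => (F z)%:E) =
      (fun z => \sum_(i < d) \sum_(j < d) ((v 0 i * v 0 j) * f i j z)%:E)%E.
    apply: funext => z.
    under [RHS]eq_bigr do rewrite sumEFin.
    rewrite sumEFin; congr (_%:E); rewrite /F /f /dotz.
    rewrite expr2 mulr_suml mulr_sumr; apply: eq_bigr => i _.
    rewrite mulr_sumr mulr_sumr; apply: eq_bigr => j _; ring.
  rewrite eF integral_sum //; last first.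
    by move=> i; apply: integrable_sum => // j _; exact: intg.
  rewrite -sumEFin; apply: eq_bigr => i _.
  rewrite (integral_sum measurableT (fun j => intg i j)).
  rewrite -sumEFin; apply: eq_bigr => j _.
  rewrite EFinM HE -integralZl //.
pose a := - lambda / c.
have a0 : 0 < a by rewrite /a divr_gt0 // oppr_gt0.
have ea : - lambda = a * c by rewrite /a divfK // gt_eqF.
pose g2 z := (p1 (dotz w z) * dotz v z) ^+ 2.
have key : forall z, sqnormz z <= 1 -> 2 * a / c * `|F z| <= g2 z + a ^+ 2.
  move=> z hz; rewrite /g2 /F.
  have hu := @dotz_v_le1 R d v z hv hz.
  have hA := hphi (dotz w z).
  set s := dotz w z in hA *; set u := dotz v z in hu *.
  have eg : (p1 s * u) ^+ 2 = (`|p1 s| * `|u|) ^+ 2.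
    by rewrite -normrM real_normK // num_real.
  rewrite eg normrM normrX.
  set A := `|p2 s| in hA *; set B := `|p1 s| in hA eg *; set U := `|u| in hu eg *.
  pose X := A / c.
  have eA : A = X * c by rewrite /X divfK // gt_eqF.
  have X0 : 0 <= X by rewrite /X divr_ge0 // ?normr_ge0 // ltW.
  have hX : X <= B by rewrite -(ler_pM2r hc) -eA mulrC.
  have -> : 2 * a / c * (A * U ^+ 2) = 2 * a * (X * U ^+ 2).
    by rewrite eA; field; rewrite gt_eqF.
  have U0 : 0 <= U := normr_ge0 u.
  have B0 : 0 <= B := normr_ge0 _.
  have h1 : X * U ^+ 2 <= B * U.
    apply: ler_pM => //; first exact: sqr_ge0.
    by rewrite expr2; apply: ler_piMr.
  have h2 : 2 * a * (B * U) <= (B * U) ^+ 2 + a ^+ 2.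
    have := sqr_ge0 (B * U - a); nra.
  apply: le_trans h2; rewrite ler_pM2l //; nra.
have mg2 : measurable_fun setT g2.
  apply: measurable_funX; apply: measurable_funM => //.
  exact: measurableT_comp mp1 ms.
have maF : measurable_fun setT (fun z => `|F z|).
  exact: measurableT_comp (@normr_measurable R setT) mF.
have lamF : ((- lambda)%:E <= \int[P]_z (`|F z|)%:E)%E.
  have mEF : measurable_fun setT (fun z => (F z)%:E) by exact/measurable_EFinP.
  have := le_abse_integral P measurableT mEF.
  rewrite -lamE abse_EFin => h; apply: le_trans _ (le_trans h _).
    by rewrite lee_fin ltr0_norm.
  rewrite le_eqVlt; apply/orP; left; apply/eqP.
  by apply: eq_integral => z _; rewrite abse_EFin.
have k0 : 0 <= 2 * a / c by rewrite ltW // divr_gt0 // mulr_gt0.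
have hae : (\int[P]_z ((2 * a / c * `|F z|)%:E) <= \int[P]_z ((g2 z + a ^+ 2)%:E))%E.
  apply: (@ae_ge0_le_integral _ _ R P setT measurableT) => //.
  - by move=> z _; rewrite lee_fin mulr_ge0.
  - have : measurable_fun setT (fun z => 2 * a / c * `|F z|).
      by apply: measurable_funM => //; exact: measurable_cst.
    move=> hh; exact: (measurableT_comp (@EFin_measurable R setT) hh).
  - by move=> z _; rewrite lee_fin addr_ge0 // ?sqr_ge0.
  - have : measurable_fun setT (fun z => g2 z + a ^+ 2).
      by apply: measurable_funD => //; exact: measurable_cst.
    move=> hh; exact: (measurableT_comp (@EFin_measurable R setT) hh).
  - apply: (@ae_supp R d P hsupp) => z hz _; rewrite lee_fin; exact: key.
have lhsE : (\int[P]_z ((2 * a / c * `|F z|)%:E) = (2 * a / c)%:E * \int[P]_z (`|F z|)%:E)%E.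
  rewrite -ge0_integralZl //.
  exact: (measurableT_comp (@EFin_measurable R setT) maF).
have rhsE : (\int[P]_z ((g2 z + a ^+ 2)%:E) = \int[P]_z (g2 z)%:E + (a ^+ 2)%:E)%E.
  transitivity (\int[P]_z ((g2 z)%:E + (a ^+ 2)%:E))%E.
    by apply: eq_integral => z _; rewrite EFinD.
  rewrite ge0_integralD //.
  - rewrite integral_cst //.
    have h1 : (P : measure _ R) [set: d.-tuple R] = 1%E := probability_setT P.
    by rewrite h1 mule1.
  - by move=> z _; rewrite lee_fin sqr_ge0.
  - exact: (measurableT_comp (@EFin_measurable R setT) mg2).
  - by move=> z _; rewrite lee_fin sqr_ge0.
have tot : ((2 * a / c * (- lambda))%:E <= \int[P]_z (g2 z)%:E + (a ^+ 2)%:E)%E.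
  rewrite -rhsE; apply: le_trans hae; rewrite lhsE EFinM.
  by apply: lee_wpmul2l; rewrite ?lee_fin.
have e2 : 2 * a / c * (- lambda) = 2 * a ^+ 2.
  by rewrite ea; field; rewrite gt_eqF.
have eL : (lambda / c) ^+ 2 = a ^+ 2 by rewrite /a mulNr sqrrN.
rewrite eL; change (((a ^+ 2)%:E <= \int[P]_z (g2 z)%:E)%E).
have : (0 <= \int[P]_z (g2 z)%:E)%E.
  by apply: integral_ge0 => z _; rewrite lee_fin sqr_ge0.
move: tot; rewrite e2; move: (\int[P]_z (g2 z)%:E)%E => X.
case: X => [x| |] //=.
- by rewrite -EFinD !lee_fin => h _; lra.
- by move=> _ _; rewrite leey.
Qed.
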